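(* Let $w\in[k]^n$ and let $m$ be a positive integer. If $\mathrm{LT}(w)\geq m$, then $w$ contains monotone twins of length $m$.
   Context: $[k]=\{1,\dots,k\}$; $w[i]$ is the $i$-th letter of $w$. Two subsequences of $w$ are twins if they are equal as words and use disjoint sets of positions of $w$; $\mathrm{LT}(w)$ is the maximum length of twins in $w$. Twins $w_1,w_2$ of length $m$, occupying positions $p_1<\dots<p_m$ and $p_1'<\dots<p_m'$ of $w$ respectively, are monotone if $p_i<p_i'$ for all $i$ (the $i$-th letter of $w_1$ precedes the $i$-th letter of $w_2$ in $w$). *)

(* Defs.v *)
From mathcomp Require Import all_boot all_order.
Set Implicit Arguments. Unset Strict Implicit. Unset Printing Implicit Defensive.

(* A word w in [k]^n is a function 'I_n -> 'I_k (positions 0..n-1, letters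
   0..k-1).  A subsequence of length m is given by its strictly increasing
   position map p : 'I_m -> 'I_n. *)

Definition incr_pos (n m : nat) (p : {ffun 'I_m -> 'I_n}) : bool :=
  [forall i : 'I_m, forall j : 'I_m, (i < j)%N ==> (p i < p j)%N].

Definition twins (k n m : nat) (w : 'I_n -> 'I_k)
  (p q : {ffun 'I_m -> 'I_n}) : bool :=
  [&& incr_pos p, incr_pos q,
      [forall i : 'I_m, w (p i) == w (q i)] &
      [forall i : 'I_m, forall j : 'I_m, p i != q j]].

Definition has_twins (k n m : nat) (w : 'I_n -> 'I_k) : bool :=
  [exists p : {ffun 'I_m -> 'I_n}, exists q : {ffun 'I_m -> 'I_n}, twins w p q].

(* LT(w): maximum length of twins in w (twins have length <= n/2 <= n). *)
Definition LT (k n : nat) (w : 'I_n -> 'I_k) : nat :=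
  \max_(m < n.+1 | has_twins m w) m.

Definition monotone_twins (k n m : nat) (w : 'I_n -> 'I_k)
  (p q : {ffun 'I_m -> 'I_n}) : bool :=
  twins w p q && [forall i : 'I_m, (p i < q i)%N].

(* Main.v *)
Require Import Defs.
From mathcomp Require Import all_boot all_order.
From mathcomp Require Import zify.

Lemma mono_from_twins (k n M m : nat) (w : 'I_n -> 'I_k)
  (p q : {ffun 'I_M -> 'I_n}) (h : (m <= M)%N) :
  twins w p q -> exists p' q' : {ffun 'I_m -> 'I_n}, monotone_twins w p' q'.
Proof.
case/and4P => /forallP Hp /forallP Hq /forallP Hw /forallP Hd.
have Hp' : forall i j : 'I_M, (i < j)%N -> (p i < p j)%N.
  by move=> i j ij; move: (Hp i) => /forallP /(_ j) /implyP; apply.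
have Hq' : forall i j : 'I_M, (i < j)%N -> (q i < q j)%N.
  by move=> i j ij; move: (Hq i) => /forallP /(_ j) /implyP; apply.
have Hd' : forall i j : 'I_M, p i != q j.
  by move=> i j; move: (Hd i) => /forallP /(_ j).
have injp : forall i j : 'I_M, p i = p j -> i = j.
  move=> i j e; case: (ltngtP i j) => [lt|lt|/val_inj //].
    by have := Hp' _ _ lt; rewrite e ltnn.
  by have := Hp' _ _ lt; rewrite e ltnn.
have injq : forall i j : 'I_M, q i = q j -> i = j.
  move=> i j e; case: (ltngtP i j) => [lt|lt|/val_inj //].
    by have := Hq' _ _ lt; rewrite e ltnn.
  by have := Hq' _ _ lt; rewrite e ltnn.
pose W := widen_ord h.
exists [ffun i => if (p (W i) < q (W i))%N then p (W i) else q (W i)].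
exists [ffun i => if (p (W i) < q (W i))%N then q (W i) else p (W i)].
have neq : forall i : 'I_M, (p i : nat) <> q i.
  by move=> i e; move: (Hd' i i); rewrite (_ : p i = q i) ?eqxx //; apply: val_inj.
apply/andP; split; last first.
  apply/forallP => i; rewrite !ffunE; case: ifP => // /negbT; rewrite -leqNgt.
  move: (neq (W i)); lia.
apply/and4P; split.
- apply/forallP => i; apply/forallP => j; apply/implyP => ij; rewrite !ffunE.
  have a := Hp' (W i) (W j) ij; have b := Hq' (W i) (W j) ij.
  by case: ifP; case: ifP => /= X Y; lia.
- apply/forallP => i; apply/forallP => j; apply/implyP => ij; rewrite !ffunE.
  have a := Hp' (W i) (W j) ij; have b := Hq' (W i) (W j) ij.
  by case: ifP; case: ifP => /= X Y; lia.
- apply/forallP => i; rewrite !ffunE; have := Hw (W i).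
  by case: ifP => // _ /eqP ->.
- apply/forallP => i; apply/forallP => j; rewrite !ffunE.
  have nij : W i <> W j -> i <> j by move=> H e; apply: H; rewrite e.
  case: (eqVneq i j) => [->|ne].
    case: ifP => _; apply/eqP => e.
      by apply: (neq (W j)); rewrite e.
    by apply: (neq (W j)); rewrite e.
  have nW : W i <> W j.
    by move=> e; move/eqP: ne; apply; apply: ord_inj; exact: (congr1 val e).
  case: ifP => _; case: ifP => _; apply/eqP => e.
  all: first [ by apply: nW; apply: injp | by apply: nW; apply: injq
             | by move: (Hd' (W i) (W j)); rewrite e eqxx
             | by move: (Hd' (W j) (W i)); rewrite e eqxx ].
Qed.

Theorem lemma17 (k n m : nat) (w : 'I_n -> 'I_k) :
  (0 < m)%N -> (m <= LT w)%N ->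
  exists p q : {ffun 'I_m -> 'I_n}, monotone_twins w p q.
Proof.
move=> m0 hm.
case: (boolP [exists M : 'I_n.+1, has_twins M w && (m <= M)%N]).
  case/existsP => M /andP [/existsP [p /existsP [q t]] hM].
  exact: mono_from_twins hM t.
move=> /existsPn H.
have : (LT w <= m.-1)%N.
  apply/bigmax_leqP => M hM; move: (H M); rewrite hM /= -ltnNge; lia.
lia.
Qed.
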